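(* Let $C$ be a finite set of level constraints in normal form with $\mathcal{I}(C) \cap \mathcal{I}_{fresh} = \emptyset$. If $C; id \leadsto^* \emptyset; \theta$ by a finite sequence of unification steps, then $\theta$ is a most general unifier of $C$: $\theta \vDash C$, and for every level substitution $\tau$ with $\tau \vDash C$ there is a level substitution $\tau'$ such that $i\tau \simeq (i\theta)\tau'$ for all $i \in \mathcal{I}(C)$.
   Context: Levels: $l ::= i \mid \mathtt{z} \mid \mathtt{s}\,l \mid l \sqcup l'$, $i$ in an infinite totally ordered set $\mathcal{I}$ of level variables; $\simeq$ is the smallest congruence (closed under constructors and substitution of levels for variables) containing $i_1 \sqcup (i_2 \sqcup i_3) \approx (i_1 \sqcup i_2) \sqcup i_3$, $i_1 \sqcup i_2 \approx i_2 \sqcup i_1$, $\mathtt{s}(i_1 \sqcup i_2) \approx \mathtt{s}\,i_1 \sqcup \mathtt{s}\,i_2$, $i \sqcup \mathtt{s}\,i \approx \mathtt{s}\,i$, $i \sqcup \mathtt{z} \approx i$, $i \sqcup i \approx i$. Normal form of levels: $\mathtt{s}^k\,\mathtt{z} \sqcup (\sqcup_{i \in V} \mathtt{s}^{n_i}\,i)$ with $V$ a strictly increasing sequence of variables, $n_i \le k$; every $l$ has a unique normal form $\hat l \simeq l$. A constraint $l_1 = l_2$ is in normal form if both sides are in normal form, each variable occurring on both sides has the same exponent on both sides, and at least one exponent (of $\mathtt{z}$ or of a variable, on either side) is $0$; $\widehat{C}$ denotes putting each constraint of $C$ in normal form (normalize both sides, for a variable on both sides drop the occurrence with smaller exponent,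 then subtract the minimum exponent from all exponents). $\theta \vDash C$ means $l_1\theta \simeq l_2\theta$ for all $l_1 = l_2 \in C$. $id$ is the identity substitution. For substitutions: $dom\,\theta = \{i \mid i\theta \ne i\}$; $\mathcal{I}(l)$ is the set of variables of $l$, $\mathcal{I}(C)$ those of $C$; $range\,\theta = \bigcup_{i \in dom\,\theta} \mathcal{I}(i\theta)$; $\mathcal{I}(\theta) = dom\,\theta \cup range\,\theta$; $\widehat{\theta} = \{i \mapsto \widehat{i\theta}\}_{i \in dom\,\theta}$; $\theta\{l/j\} = \{i \mapsto (i\theta)\{l/j\}\}_{i \in dom\,\theta}$; $\mathcal{I}_{fresh} \subsetneq \mathcal{I}$ is a fixed infinite set of fresh variables. In normal-form levels, $\mathtt{z} \sqcup i$ means $\mathtt{s}^0\mathtt{z} \sqcup \mathtt{s}^0 i$, and ''$\mathtt{s}^m\,x \in l$'' means $\mathtt{s}^m\,x$ is a summand of $l$. The unification steps on pairs $C;\theta$ are: (Trivial) $\{l = l\} \cup C; \theta \leadsto C; \theta$. (Orient) $\{l = l'\} \cup C; \theta \leadsto \{l' = l\} \cup C; \theta$ if $l'$ is $\mathtt{z}$ or $\mathtt{z} \sqcup i$. (Eliminate 1) $\{\mathtt{z} \sqcup i = l\} \cup C; \theta \leadsto \widehat{C\{l/i\}}; (\widehat{\theta\{l/i\}}, i \mapsto l)$ if $i$ does not occur in $l$. (Eliminate 2) $\{\mathtt{z} \sqcup i = l\} \cup C; \theta \leadsto \widehat{C\{l'/i\}}; (\widehat{\theta\{l'/i\}}, i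 \mapsto l')$ where $l' = l\{i'/i\}$ for some $i' \in \mathcal{I}_{fresh} \setminus \mathcal{I}(i, l, C, \theta)$, if $\mathtt{s}^0\,i \in l$. (Decompose) $\{\mathtt{z} = \mathtt{z} \sqcup (\sqcup_{i \in V} i)\} \cup C; \theta \leadsto \{\mathtt{z} \sqcup i = \mathtt{z}\}_{i \in V} \cup C; \theta$. (Clash) $\{\mathtt{z} = l\} \cup C; \theta \leadsto \bot$ if $\mathtt{s}^n\,i \in l$ or $\mathtt{s}^n\,\mathtt{z} \in l$ for some $n \ne 0$. *)

(* Defs.v *)
From HB Require Import structures.
From mathcomp Require Import all_boot.
Set Implicit Arguments. Unset Strict Implicit. Unset Printing Implicit Defensive.

Inductive level : Type :=
| LVar : nat -> level
| LZ   : level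
| LS   : level -> level
| LMax : level -> level -> level.

Definition level_dec : comparable level.
Proof. move=> x y; rewrite /decidable; decide equality; exact: (decP eqP). Defined.
HB.instance Definition _ := comparableMixin level_dec.

Definition constraint := (level * level)%type.

(** level substitutions: total maps; dom θ = {i | iθ <> i} *)
Definition lsubst := nat -> level.
Definition idsubst : lsubst := fun i => LVar i.

Fixpoint subst (th : lsubst) (l : level) : level :=
  match l with
  | LVar i => th i
  | LZ => LZ
  | LS l => LS (subst th l)
  | LMax a b => LMax (subst th a) (subst th b)
  end.

Definition subst1 (j : nat) (l' : level) (l : level) : level :=
  subst (fun i => if i == j then l' else LVar i) l.

(** * The congruence ≃ : smallest congruence, closed under substitution (axioms
    instantiated at arbitrary levels), containing the six axioms. *)
Inductive lequiv : level -> level -> Prop :=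
| lequiv_refl a : lequiv a a
| lequiv_sym a b : lequiv a b -> lequiv b a
| lequiv_trans a b c : lequiv a b -> lequiv b c -> lequiv a c
| lequiv_S a b : lequiv a b -> lequiv (LS a) (LS b)
| lequiv_Max a a' b b' : lequiv a a' -> lequiv b b' -> lequiv (LMax a b) (LMax a' b')
| ax_assoc a b c : lequiv (LMax a (LMax b c)) (LMax (LMax a b) c)
| ax_comm a b : lequiv (LMax a b) (LMax b a)
| ax_Sdist a b : lequiv (LS (LMax a b)) (LMax (LS a) (LS b))
| ax_succ a : lequiv (LMax a (LS a)) (LS a)
| ax_zero a : lequiv (LMax a LZ) a
| ax_idem a : lequiv (LMax a a) a.

(** atoms of a level: (None, n) for s^n z, (Some i, n) for s^n i (s pushed through ⊔) *)
Fixpoint atoms (l : level) : seq (option nat * nat) :=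
  match l with
  | LVar i => [:: (Some i, 0)]
  | LZ => [:: (None, 0)]
  | LS l => [seq (p.1, p.2.+1) | p <- atoms l]
  | LMax a b => atoms a ++ atoms b
  end.

Definition vars (l : level) : seq nat := pmap fst (atoms l).
Definition varsC (C : seq constraint) : seq nat :=
  flatten [seq vars c.1 ++ vars c.2 | c <- C].

Definition in_dom (th : lsubst) (i : nat) : Prop := th i <> LVar i.
Definition in_range (th : lsubst) (x : nat) : Prop :=
  exists j, in_dom th j /\ x \in vars (th j).

(** * Normal forms  s^k z ⊔ (s^{n_1} i_1 ⊔ (... ⊔ s^{n_m} i_m)) *)
Fixpoint vsum (x : nat * nat) (s : seq (nat * nat)) : level :=
  match s with
  | [::] => iter x.2 LS (LVar x.1)
  | y :: s' => LMax (iter x.2 LS (LVar x.1)) (vsum y s')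
  end.

Definition build (k : nat) (s : seq (nat * nat)) : level :=
  match s with
  | [::] => iter k LS LZ
  | x :: s' => LMax (iter k LS LZ) (vsum x s')
  end.

Definition nf_data (k : nat) (s : seq (nat * nat)) : bool :=
  sorted ltn (unzip1 s) && all (fun p => p.2 <= k) s.

Definition nf_k (l : level) : nat := \max_(p <- atoms l) p.2.
Definition nf_exp (l : level) (i : nat) : nat :=
  \max_(p <- atoms l | p.1 == Some i) p.2.
Definition nf_s (l : level) : seq (nat * nat) :=
  [seq (i, nf_exp l i) | i <- sort leq (undup (vars l))].

Definition lnorm (l : level) : level := build (nf_k l) (nf_s l).

(** summands of a level;  "s^m x ∈ l"  :=  iter m LS x \in summands l *)
Fixpoint summands (l : level) : seq level :=
  match l with
  | LMax a b => summands a ++ summands b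
  | _ => [:: l]
  end.

Definition constraint_nf (c : constraint) : Prop :=
  exists k1 s1 k2 s2,
    [/\ nf_data k1 s1, nf_data k2 s2, c = (build k1 s1, build k2 s2),
        (forall i n m, (i, n) \in s1 -> (i, m) \in s2 -> n = m)
      & [|| k1 == 0, k2 == 0 | has (fun p => p.2 == 0) (s1 ++ s2)]].

(** \hat c : normalize both sides, drop the smaller-exponent occurrence of a
    variable occurring on both sides, subtract the minimum exponent *)
Definition cnorm (c : constraint) : constraint :=
  let k1 := nf_k c.1 in let s1 := nf_s c.1 in
  let k2 := nf_k c.2 in let s2 := nf_s c.2 in
  let s1' := [seq p <- s1 | all (fun q => (q.1 != p.1) || (q.2 <= p.2)) s2] in
  let s2' := [seq p <- s2 | all (fun q => (q.1 != p.1) || (q.2 <= p.2)) s1] in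
  let m := foldr minn k1 (k2 :: [seq p.2 | p <- s1' ++ s2']) in
  let sub := fun p : nat * nat => (p.1, p.2 - m) in
  (build (k1 - m) (map sub s1'), build (k2 - m) (map sub s2')).

Definition chat (C : seq constraint) : seq constraint := map cnorm C.

Definition substC (i : nat) (l : level) (C : seq constraint) : seq constraint :=
  [seq (subst1 i l c.1, subst1 i l c.2) | c <- C].

Definition upd (th : lsubst) (i : nat) (l : level) : lsubst :=
  fun j => if j == i then l
           else if th j == LVar j then LVar j else lnorm (subst1 i l (th j)).

(** * Unification steps. [rule fresh c C th C' th'] : {c} ∪ C; th ~> C'; th'.
    (Clash, leading to ⊥, is irrelevant for derivations ending in ∅.) *)
Inductive rule (fresh : pred nat) :
  constraint -> seq constraint -> lsubst -> seq constraint -> lsubst -> Prop :=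
| R_trivial l C th : rule fresh (l, l) C th C th
| R_orient l l' C th :
    (l' = LZ \/ exists i, l' = LMax LZ (LVar i)) ->
    rule fresh (l, l') C th ((l', l) :: C) th
| R_elim1 i l C th :
    i \notin vars l ->
    rule fresh (LMax LZ (LVar i), l) C th (chat (substC i l C)) (upd th i l)
| R_elim2 i l i' C th :
    fresh i' -> i' != i -> i' \notin vars l -> i' \notin varsC C ->
    ~ in_dom th i' -> ~ in_range th i' ->
    LVar i \in summands l ->
    rule fresh (LMax LZ (LVar i), l) C th
      (chat (substC i (subst1 i (LVar i') l) C)) (upd th i (subst1 i (LVar i') l))
| R_decompose s C th :
    nf_data 0 s -> all (fun p => p.2 == 0) s ->
    rule fresh (LZ, build 0 s) C th ([seq (LMax LZ (LVar p.1), LZ) | p <- s] ++ C) th.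

Definition state := (seq constraint * lsubst)%type.

(** one step on finite sets of constraints (lists up to same elements) *)
Definition step (fresh : pred nat) (st st' : state) : Prop :=
  exists c C, st.1 =i c :: C /\ rule fresh c C st.2 st'.1 st'.2.

Inductive steps (fresh : pred nat) : state -> state -> Prop :=
| steps_refl st : steps fresh st st
| steps_cons st st' st'' : step fresh st st' -> steps fresh st' st'' -> steps fresh st st''.

Definition models (th : lsubst) (C : seq constraint) : Prop :=
  forall c, c \in C -> lequiv (subst th c.1) (subst th c.2).

(* Main.v *)
Require Import Defs.
From mathcomp Require Import all_boot zify.
Set Implicit Arguments. Unset Strict Implicit. Unset Printing Implicit Defensive.

Fixpoint eval (rho : nat -> nat) (l : level) : nat :=
  match l with
  | LVar i => rho i
  | LZ => 0
  | LS l => (eval rho l).+1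
  | LMax a b => maxn (eval rho a) (eval rho b)
  end.

Definition sem (a b : level) := forall rho, eval rho a = eval rho b.

Lemma lequiv_sound a b : lequiv a b -> sem a b.
Proof.
elim=> {a b} //=; try (move=> *; move=> rho /=; lia).
- by move=> a b _ H rho; rewrite H.
- by move=> a b c _ H1 _ H2 rho; rewrite H1 H2.
- by move=> a b _ H rho /=; rewrite H.
- by move=> a a' b b' _ H1 _ H2 rho /=; rewrite H1 H2.
Qed.

Lemma eval_subst rho s x : eval rho (subst s x) = eval (fun j => eval rho (s j)) x.
Proof. by elim: x => //= [l ->|a -> b ->]. Qed.

Lemma subst_comp s t x : subst s (subst t x) = subst (fun j => subst s (t j)) x.
Proof. by elim: x => //= [l ->|a -> b ->]. Qed.

Lemma subst_ext r r' x : r =1 r' -> subst r x = subst r' x.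
Proof. by move=> H; elim: x => //= [l ->|a -> b ->]. Qed.

Lemma subst_id x : subst idsubst x = x.
Proof. by elim: x => //= [l ->|a -> b ->]. Qed.

Lemma vars_LVar i : vars (LVar i) = [:: i]. Proof. by []. Qed.
Lemma vars_LZ : vars LZ = [::]. Proof. by []. Qed.
Lemma vars_LS l : vars (LS l) = vars l.
Proof. rewrite /vars /=; by elim: (atoms l) => //= -[[i|] n] A ->. Qed.
Lemma vars_LMax a b : vars (LMax a b) = vars a ++ vars b.
Proof. by rewrite /vars /= pmap_cat. Qed.

Lemma eval_ext r r' x : {in vars x, r =1 r'} -> eval r x = eval r' x.
Proof.
elim: x => [i|//|l IH|a IHa b IHb] H /=.
- by apply: H; rewrite vars_LVar mem_seq1.
- by rewrite IH // => j Hj; apply: H; rewrite vars_LS.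
- rewrite IHa ?IHb // => j Hj; apply: H; by rewrite vars_LMax mem_cat Hj ?orbT.
Qed.

Lemma subst_ext_vars r r' x : {in vars x, r =1 r'} -> subst r x = subst r' x.
Proof.
elim: x => [i|//|l IH|a IHa b IHb] H /=.
- by apply: H; rewrite vars_LVar mem_seq1.
- by rewrite IH // => j Hj; apply: H; rewrite vars_LS.
- rewrite IHa ?IHb // => j Hj; apply: H; by rewrite vars_LMax mem_cat Hj ?orbT.
Qed.

Lemma vars_subst s x j : j \in vars (subst s x) -> exists2 k, k \in vars x & j \in vars (s k).
Proof.
elim: x => [i|//|l IH|a IHa b IHb] /=.
- by move=> H; exists i; rewrite ?vars_LVar ?mem_seq1.
- by rewrite vars_LS => /IH [k Hk Hj]; exists k; rewrite ?vars_LS.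
- rewrite vars_LMax mem_cat => /orP [/IHa|/IHb] [k Hk Hj]; exists k => //;
  by rewrite vars_LMax mem_cat Hk ?orbT.
Qed.

Lemma eval_iter rho n x : eval rho (iter n LS x) = eval rho x + n.
Proof. by elim: n => [|n IH] /=; rewrite ?addn0 ?IH ?addnS. Qed.

Lemma eval_vsum rho x s :
  eval rho (vsum x s) = maxn (rho x.1 + x.2) (\max_(p <- s) (rho p.1 + p.2)).
Proof.
elim: s x => [|y s IH] x /=; first by rewrite big_nil maxn0 eval_iter.
by rewrite IH big_cons eval_iter.
Qed.

Lemma eval_build rho k s :
  eval rho (build k s) = maxn k (\max_(p <- s) (rho p.1 + p.2)).
Proof.
case: s => [|x s] /=; first by rewrite big_nil maxn0 eval_iter.
by rewrite eval_vsum big_cons eval_iter.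
Qed.

Definition atl (p : option nat * nat) : level :=
  iter p.2 LS (match p.1 with Some i => LVar i | None => LZ end).
Definition atval rho (p : option nat * nat) : nat :=
  (match p.1 with Some i => rho i | None => 0 end) + p.2.

Lemma atoms_nil l : atoms l != [::].
Proof. elim: l => //= [l|a IH b _]; first by case: (atoms l).
by case: (atoms a) IH. Qed.

Lemma max_succ (T : Type) (A : seq T) F c :
  maxn c.+1 (\max_(p <- A) (F p).+1) = (maxn c (\max_(p <- A) F p)).+1.
Proof.
elim: A c => [|x A IH] c; first by rewrite !big_nil !maxn0.
by rewrite !big_cons !maxnA maxnSS IH.
Qed.

Lemma eval_atoms rho l : eval rho l = \max_(p <- atoms l) atval rho p.
Proof.
elim: l => [i|||a IHa b IHb] /=.
- by rewrite big_cons big_nil /atval /= addn0 maxn0.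
- by rewrite big_cons big_nil.
- move=> l IH; rewrite IH; case: (atoms l) (atoms_nil l) => // x A _.
  rewrite /= !big_cons big_map -max_succ /atval /= addnS.
  by congr maxn; apply: eq_bigr => -[[i|] n] _ /=; rewrite addnS.
- by rewrite big_cat IHa IHb.
Qed.

Lemma ltr b a c : lequiv a b -> lequiv b c -> lequiv a c.
Proof. exact: lequiv_trans. Qed.
Arguments ltr b {a c}.

Definition lle x y := lequiv (LMax x y) y.

Lemma lle_trans x y z : lle x y -> lle y z -> lle x z.
Proof.
move=> H1 H2; rewrite /lle.
apply: (ltr (LMax x (LMax y z))).
  by apply: lequiv_Max; [apply: lequiv_refl|apply: lequiv_sym].
apply: (ltr (LMax (LMax x y) z)); first exact: ax_assoc.
apply: (ltr (LMax y z)) => //.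
by apply: lequiv_Max => //; apply: lequiv_refl.
Qed.

Lemma lle_S x y : lle x y -> lle (LS x) (LS y).
Proof.
move=> H; apply: (ltr (LS (LMax x y))).
  by apply: lequiv_sym; apply: ax_Sdist.
exact: lequiv_S.
Qed.

Lemma lle_succ x : lle x (LS x). Proof. exact: ax_succ. Qed.
Lemma lle_refl x : lle x x. Proof. exact: ax_idem. Qed.
Lemma lle_Z x : lle LZ x.
Proof. apply: (ltr (LMax x LZ)); [exact: ax_comm|exact: ax_zero]. Qed.

Lemma lle_iter n d x : lle (iter n LS x) (iter (n + d) LS x).
Proof.
elim: d => [|d IH]; first by rewrite addn0; apply: lle_refl.
apply: lle_trans IH _; rewrite addnS /=; exact: lle_succ.
Qed.

Lemma lle_iterS n x y : lle x y -> lle (iter n LS x) (iter n LS y).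
Proof. by elim: n => //= n IH H; apply: lle_S; apply: IH. Qed.

Lemma lle_antisym x y : lle x y -> lle y x -> lequiv x y.
Proof.
move=> H1 H2; apply: (ltr (LMax y x)); first exact: lequiv_sym.
by apply: (ltr (LMax x y)); [exact: ax_comm|].
Qed.

Lemma lle_max x y z : lle x z -> lle y z -> lle (LMax x y) z.
Proof.
move=> H1 H2; rewrite /lle.
apply: (ltr (LMax x (LMax y z))).
  by apply: lequiv_sym; apply: ax_assoc.
apply: (ltr (LMax x z)) => //.
by apply: lequiv_Max => //; apply: lequiv_refl.
Qed.

Fixpoint Jl (x : level) (r : seq level) : level :=
  match r with [::] => x | y :: r' => LMax x (Jl y r') end.

Lemma lle_Jl x r y : y \in x :: r -> lle y (Jl x r).
Proof.
elim: r x => [|z r IH] x /=.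
  by rewrite mem_seq1 => /eqP ->; apply: lle_refl.
rewrite in_cons => /orP [/eqP ->|Hy].
  rewrite /lle; apply: (ltr (LMax (LMax x x) (Jl z r))); first exact: ax_assoc.
  by apply: lequiv_Max; [apply: ax_idem|apply: lequiv_refl].
have H := IH _ Hy; rewrite /lle.
apply: (ltr (LMax (LMax y x) (Jl z r))); first exact: ax_assoc.
apply: (ltr (LMax (LMax x y) (Jl z r))).
  by apply: lequiv_Max; [apply: ax_comm|apply: lequiv_refl].
apply: (ltr (LMax x (LMax y (Jl z r)))); first by apply: lequiv_sym; apply: ax_assoc.
by apply: lequiv_Max => //; apply: lequiv_refl.
Qed.

Lemma Jl_lle x r y : (forall z, z \in x :: r -> lle z y) -> lle (Jl x r) y.
Proof.
elim: r x => [|z r IH] x H /=; first by apply: H; rewrite mem_head.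
apply: lle_max; first by apply: H; rewrite mem_head.
by apply: IH => w Hw; apply: H; rewrite in_cons Hw orbT.
Qed.

Lemma Jl_cat x r y r' : lequiv (Jl x (r ++ y :: r')) (LMax (Jl x r) (Jl y r')).
Proof.
elim: r x => [|z r IH] x /=; first exact: lequiv_refl.
apply: (ltr (LMax x (LMax (Jl z r) (Jl y r')))); last exact: ax_assoc.
by apply: lequiv_Max => //; apply: lequiv_refl.
Qed.

Lemma Jl_S x r : lequiv (LS (Jl x r)) (Jl (LS x) (map LS r)).
Proof.
elim: r x => [|z r IH] x /=; first exact: lequiv_refl.
apply: (ltr (LMax (LS x) (LS (Jl z r)))); first exact: ax_Sdist.
by apply: lequiv_Max => //; apply: lequiv_refl.
Qed.

Definition JA (A : seq (option nat * nat)) : level :=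
  match A with [::] => LZ | a :: A' => Jl (atl a) (map atl A') end.

Lemma atoms_J l : lequiv l (JA (atoms l)).
Proof.
elim: l => [i|||a IHa b IHb] /=; try exact: lequiv_refl.
- move=> l IH; case: (atoms l) (atoms_nil l) IH => // x A _ IH /=.
  apply: (ltr (LS (Jl (atl x) (map atl A)))); first exact: lequiv_S.
  apply: (lequiv_trans (Jl_S _ _)).
  rewrite -!map_comp; apply: lequiv_refl.
- case: (atoms a) (atoms_nil a) IHa => // x A _ IHa.
  case: (atoms b) (atoms_nil b) IHb => // y B _ IHb /=.
  rewrite map_cat /=; apply: (lequiv_trans _ (lequiv_sym (Jl_cat _ _ _ _))).
  exact: lequiv_Max.
Qed.

Definition adom (p q : option nat * nat) := (p.1 = None \/ p.1 = q.1) /\ p.2 <= q.2.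

Lemma adom_lle p q : adom p q -> lle (atl p) (atl q).
Proof.
case: p q => [h n] [h' m] [/= Hh Hnm]; rewrite /atl /=.
rewrite -(subnKC Hnm).
apply: lle_trans (lle_iter _ _ _).
case: Hh => [->|->]; last exact: lle_refl.
by apply: lle_iterS; apply: lle_Z.
Qed.

Lemma lle_JA A B : A != [::] -> B != [::] ->
  (forall p, p \in A -> exists2 q, q \in B & adom p q) -> lle (JA A) (JA B).
Proof.
case: A => // a A _; case: B => // b B _ H /=.
apply: Jl_lle => z Hz; have: z \in map atl (a :: A) by []. move=> /mapP [p Hp ->].
have [q Hq Hd] := H p Hp.
apply: lle_trans (adom_lle Hd) _; apply: lle_Jl.
by have ->: atl b :: map atl B = map atl (b :: B) by []; apply: map_f.
Qed.

Lemma bigmax_attained (T : eqType) (r : seq T) F :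
  r != [::] -> exists2 x, x \in r & \max_(y <- r) F y = F x.
Proof.
elim: r => // x r IH _; rewrite big_cons.
case: (r =P [::]) => [->|/eqP Hr].
  by exists x; rewrite ?mem_head // big_nil maxn0.
have [y Hy ->] := IH Hr.
case: (leqP (F x) (F y)) => H.
  by exists y; rewrite ?in_cons ?Hy ?orbT //; apply/maxn_idPr.
by exists x; rewrite ?mem_head //; apply/maxn_idPl; apply: ltnW.
Qed.

Lemma sem_dom a b : sem a b ->
  forall p, p \in atoms a -> exists2 q, q \in atoms b & adom p q.
Proof.
move=> H [[i|] n] Hp.
- pose N := (\max_(q <- atoms b) q.2).+1.
  pose rho := fun j => if j == i then N else 0.
  have := H rho; rewrite !eval_atoms.
  have [q Hq ->] := bigmax_attained (atval rho) (atoms_nil b) => E.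
  have Hle : atval rho (Some i, n) <= atval rho q.
    by rewrite -E; apply: (@leq_bigmax_seq _ _ xpredT).
  have HqN : q.2 < N by rewrite ltnS; apply: (@leq_bigmax_seq _ _ xpredT).
  move: Hle; rewrite /atval /= {1}/rho eqxx.
  clear E; case: q Hq HqN => [[j|] m] Hq /= HqN; last by lia.
  rewrite /rho; case: (j =P i) => [Hji|_] Hle; last by lia. subst j.
  by exists (Some i, m) => //; split; [right|move: Hle => /=; lia].
- have := H (fun _ => 0); rewrite !eval_atoms.
  have [q Hq ->] := bigmax_attained (atval (fun _ => 0)) (atoms_nil b) => E.
  have Hle : atval (fun _ => 0) (None, n) <= atval (fun _ => 0) q.
    by rewrite -E; apply: (@leq_bigmax_seq _ _ xpredT).
  exists q => //; split; [by left|].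
  by move: Hle; rewrite /atval /=; case: q.1.
Qed.

Lemma complete a b : sem a b -> lequiv a b.
Proof.
move=> H.
apply: (lequiv_trans (atoms_J a)); apply: (lequiv_trans _ (lequiv_sym (atoms_J b))).
apply: lle_antisym; apply: lle_JA; rewrite ?atoms_nil //; apply: sem_dom => //.
Qed.

Definition ev2 rho k (s : seq (nat * nat)) := maxn k (\max_(p <- s) (rho p.1 + p.2)).

Lemma bigmax_attained_cond (T : eqType) (r : seq T) (P : pred T) F :
  has P r -> exists2 x, (x \in r) && P x & \max_(y <- r | P y) F y = F x.
Proof.
elim: r => // x r IH; rewrite big_cons /=.
case Px: (P x) => /=; last first.
  by move=> /IH [y Hy E]; exists y; rewrite // in_cons; case/andP: Hy => -> ->; rewrite orbT.
case Hr: (has P r).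
  have [y /andP [Hy Py] ->] := IH Hr.
  case: (leqP (F x) (F y)) => H.
    by exists y; rewrite ?in_cons ?Hy ?Py ?orbT //; apply/maxn_idPr.
  by exists x; rewrite ?mem_head ?Px //; apply/maxn_idPl; apply: ltnW.
move=> _; exists x; rewrite ?mem_head ?Px //.
rewrite big_hasC ?Hr // maxn0 //.
Qed.

Lemma in_vars l i : (i \in vars l) = has (fun p => p.1 == Some i) (atoms l).
Proof.
rewrite /vars mem_pmap; apply/mapP/hasP => [[p Hp E]|[p Hp /eqP E]].
  by exists p => //; rewrite E.
by exists p.
Qed.

Lemma eval_lnorm_ev2 rho l : eval rho l = ev2 rho (nf_k l) (nf_s l).
Proof.
rewrite /ev2 /nf_s big_map /= eval_atoms; apply/eqP; rewrite eqn_leq; apply/andP; split.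
- apply/bigmax_leqP_seq => -[[i|] n] Hp _; rewrite /atval /=.
  + have Hi : i \in sort leq (undup (vars l)).
      by rewrite mem_sort mem_undup in_vars; apply/hasP; exists (Some i, n).
    apply: leq_trans (leq_maxr _ _); apply: leq_trans (leq_bigmax_seq _ Hi isT).
    rewrite leq_add2l /nf_exp.
    exact: (@leq_bigmax_seq _ _ (fun p => p.1 == Some i) snd _ Hp).
  + apply: leq_trans (leq_maxl _ _); rewrite add0n /nf_k.
    exact: (@leq_bigmax_seq _ _ xpredT snd _ Hp).
- rewrite geq_max; apply/andP; split.
  + apply/bigmax_leqP_seq => p Hp _; apply: leq_trans (leq_bigmax_seq _ Hp isT).
    by rewrite /atval leq_addl.
  + apply/bigmax_leqP_seq => i; rewrite mem_sort mem_undup in_vars => Hi _.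
    rewrite /nf_exp; have [p /andP [Hp /eqP Pp] ->] := bigmax_attained_cond snd Hi.
    apply: leq_trans (leq_bigmax_seq _ Hp isT).
    by rewrite /atval Pp.
Qed.

Lemma eval_lnorm rho l : eval rho (lnorm l) = eval rho l.
Proof. by rewrite /lnorm eval_build eval_lnorm_ev2. Qed.

Definition keep (s2 : seq (nat * nat)) (p : nat * nat) :=
  all (fun q => (q.1 != p.1) || (q.2 <= p.2)) s2.

Definition cnorm_data k1 (s1 : seq (nat * nat)) k2 (s2 : seq (nat * nat)) :=
  let s1' := [seq p <- s1 | keep s2 p] in
  let s2' := [seq p <- s2 | keep s1 p] in
  let m := foldr minn k1 (k2 :: [seq p.2 | p <- s1' ++ s2']) in
  let sub := fun p : nat * nat => (p.1, p.2 - m) in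
  (build (k1 - m) (map sub s1'), build (k2 - m) (map sub s2')).

Lemma cnormE c : cnorm c = cnorm_data (nf_k c.1) (nf_s c.1) (nf_k c.2) (nf_s c.2).
Proof. by []. Qed.

Lemma foldr_minn_le k L : foldr minn k L <= k /\ forall x, x \in L -> foldr minn k L <= x.
Proof.
elim: L => [|y L [IH1 IH2]] /=; first by split.
split; first by apply: leq_trans (geq_minr _ _) IH1.
move=> x; rewrite in_cons => /orP [/eqP ->|Hx]; first exact: geq_minl.
by apply: leq_trans (geq_minr _ _) (IH2 _ Hx).
Qed.

Lemma ev2_shift rho k m s : m <= k -> (forall p, p \in s -> m <= p.2) ->
  ev2 rho (k - m) (map (fun p => (p.1, p.2 - m)) s) + m = ev2 rho k s.
Proof.
rewrite /ev2 big_map /=; elim: s => [|x s IH] Hk Hs.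
  by rewrite !big_nil; lia.
rewrite !big_cons.
have Hx := Hs x (mem_head _ _).
have := IH Hk (fun p Hp => Hs p ltac:(by rewrite in_cons Hp orbT)).
lia.
Qed.

Lemma ev2_split rho k s (P : pred (nat * nat)) :
  ev2 rho k s = maxn (ev2 rho k (filter P s)) (\max_(p <- s | ~~ P p) (rho p.1 + p.2)).
Proof.
by rewrite /ev2 (bigID P) /= big_filter maxnA.
Qed.

Lemma dropped_bound0 rho s1 s2 k2 :
  \max_(p <- s1 | ~~ keep s2 p) (rho p.1 + p.2)
    <= (ev2 rho k2 s2).-1.
Proof.
apply/bigmax_leqP_seq => p Hp /allPn [q Hq]; rewrite negb_or negbK -ltnNge => /andP [/eqP E Hlt].
have : rho q.1 + q.2 <= ev2 rho k2 s2.
  by apply: leq_trans (leq_maxr _ _); apply: (@leq_bigmax_seq _ _ xpredT _ _ Hq).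
rewrite E => H; have : rho p.1 + p.2 < ev2 rho k2 s2 by apply: leq_trans H; rewrite ltn_add2l. by case: (ev2 rho k2 s2).
Qed.

Lemma dropped_bound rho s1 s2 k2 (D := \max_(p <- s1 | ~~ keep s2 p) (rho p.1 + p.2)) :
  D = 0 \/ D < ev2 rho k2 s2.
Proof.
have := dropped_bound0 rho s1 s2 k2; rewrite -/D.
case: (ev2 rho k2 s2) => [|e] /=; [rewrite leqn0 => /eqP; left|right] => //.
Qed.

Lemma cnorm_data_sem rho k1 s1 k2 s2 :
  (forall p, p \in s1 -> p.2 <= k1) -> (forall p, p \in s2 -> p.2 <= k2) ->
  (eval rho (cnorm_data k1 s1 k2 s2).1 == eval rho (cnorm_data k1 s1 k2 s2).2)
  = (ev2 rho k1 s1 == ev2 rho k2 s2).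
Proof.
move=> _ _; rewrite /cnorm_data; cbv zeta.
set m := foldr minn k1 _.
rewrite /= !eval_build.
have [Hm1 Hm2] := foldr_minn_le k1 (k2 :: [seq p.2 | p <- [seq p <- s1 | (keep s2) p] ++ [seq p <- s2 | (keep s1) p]]).
rewrite -/m in Hm1 Hm2.
have Hk2 : m <= k2 by apply: Hm2; rewrite mem_head.
have Hs : forall p, p \in [seq p <- s1 | (keep s2) p] ++ [seq p <- s2 | (keep s1) p] -> m <= p.2.
  by move=> p Hp; apply: Hm2; rewrite in_cons map_f ?orbT.
have Hs1 : forall p, p \in [seq p <- s1 | (keep s2) p] -> m <= p.2.
  by move=> p Hp; apply: Hs; rewrite mem_cat Hp.
have Hs2 : forall p, p \in [seq p <- s2 | (keep s1) p] -> m <= p.2.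
  by move=> p Hp; apply: Hs; rewrite mem_cat Hp orbT.
have E1 := ev2_shift rho Hm1 Hs1.
have E2 := ev2_shift rho Hk2 Hs2.
rewrite /ev2 in E1 E2.
have S1 := ev2_split rho k1 s1 (keep s2).
have S2 := ev2_split rho k2 s2 (keep s1).
have D1 := dropped_bound rho s1 s2 k2.
have D2 := dropped_bound rho s2 s1 k1.
rewrite /ev2 in S1 S2 D1 D2 *.
move: E1 E2 S1 S2 D1 D2.
set X1 := \max_(p <- [seq (p.1, p.2 - m) | p <- s1 & keep s2 p]) (rho p.1 + p.2).
set X2 := \max_(p <- [seq (p.1, p.2 - m) | p <- s2 & keep s1 p]) (rho p.1 + p.2).
set F1 := \max_(p <- [seq p <- s1 | keep s2 p]) (rho p.1 + p.2).
set F2 := \max_(p <- [seq p <- s2 | keep s1 p]) (rho p.1 + p.2).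
set G1 := \max_(p <- s1) (rho p.1 + p.2).
set G2 := \max_(p <- s2) (rho p.1 + p.2).
set H1 := \max_(p <- s1 | ~~ keep s2 p) (rho p.1 + p.2).
set H2 := \max_(p <- s2 | ~~ keep s1 p) (rho p.1 + p.2).
move=> E1 E2 S1 S2 D1 D2.
apply/idP/idP => /eqP H; apply/eqP; lia.
Qed.

Lemma cnorm_sem rho c :
  (eval rho (cnorm c).1 == eval rho (cnorm c).2) = (eval rho c.1 == eval rho c.2).
Proof.
rewrite cnormE cnorm_data_sem; last 2 first.
- move=> p /mapP [i _ ->] /=; rewrite /nf_exp /nf_k.
  by apply/bigmax_leqP_seq => q Hq _; apply: (@leq_bigmax_seq _ _ xpredT snd _ Hq).
- move=> p /mapP [i _ ->] /=; rewrite /nf_exp /nf_k.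
  by apply/bigmax_leqP_seq => q Hq _; apply: (@leq_bigmax_seq _ _ xpredT snd _ Hq).
by rewrite -!eval_lnorm_ev2.
Qed.

Lemma atoms_iterZ n : atoms (iter n LS LZ) = [:: (None, n)].
Proof. by elim: n => //= n ->. Qed.
Lemma atoms_iterV n i : atoms (iter n LS (LVar i)) = [:: (Some i, n)].
Proof. by elim: n => //= n ->. Qed.

Lemma atoms_vsum x s : atoms (vsum x s) = (Some x.1, x.2) :: [seq (Some p.1, p.2) | p <- s].
Proof.
elim: s x => [|y s IH] x /=; first by rewrite atoms_iterV.
by rewrite atoms_iterV IH.
Qed.

Lemma atoms_build k s : atoms (build k s) = (None, k) :: [seq (Some p.1, p.2) | p <- s].
Proof. case: s => [|x s] /=; first by rewrite atoms_iterZ. by rewrite atoms_iterZ atoms_vsum. Qed.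

Lemma vars_build k s : vars (build k s) = unzip1 s.
Proof. rewrite /vars atoms_build /=; by elim: s => //= p s ->. Qed.

Definition consist l := forall i n m, (Some i, n) \in atoms l -> (Some i, m) \in atoms l -> n = m.
Definition fn (s : seq (nat * nat)) := forall i n m, (i, n) \in s -> (i, m) \in s -> n = m.

Lemma consist_build k s : fn s -> consist (build k s).
Proof.
move=> H i n m; rewrite atoms_build !in_cons /=.
move=> /mapP [[a b] Hp [E1 E2]] /mapP [[c d] Hq [E3 E4]] /=.
rewrite /= in E1 E2 E3 E4; subst; exact: H Hp Hq.
Qed.

Lemma fn_filter P s : fn s -> fn (filter P s).
Proof. by move=> H i n m; rewrite !mem_filter => /andP [_ H1] /andP [_ H2]; apply: H H1 H2. Qed.

Lemma fn_map_sub m s : fn s -> fn (map (fun p => (p.1, p.2 - m)) s).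
Proof.
move=> H i n k /mapP [[a b] Hp [-> ->]] /mapP [[c d] Hq [E ->]] /=.
by rewrite /= in E; subst c; rewrite (H a b d).
Qed.

Lemma fn_nf_s l : fn (nf_s l).
Proof. by move=> i n m /mapP [j _ [-> ->]] /mapP [k _ [-> ->]]. Qed.

Lemma fn_uniq s : uniq (unzip1 s) -> fn s.
Proof.
elim: s => [|[a b] s IH] //= /andP [Ha Hu] i n m; rewrite !in_cons.
case/orP => [/eqP [E1 E2]|H1] /orP [/eqP [E3 E4]|H2]; subst => //.
- by case/negP: Ha; apply/mapP; exists (a, m).
- by case/negP: Ha; apply/mapP; exists (a, n).
- exact: IH H1 H2.
Qed.

Lemma consist_cnorm c : consist (cnorm c).1 /\ consist (cnorm c).2.
Proof.
rewrite cnormE /cnorm_data; cbv zeta; split; apply: consist_build;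
  apply: fn_map_sub; apply: fn_filter; apply: fn_nf_s.
Qed.

Lemma vars_nf_s l j : j \in unzip1 (nf_s l) -> j \in vars l.
Proof. by rewrite /nf_s /unzip1 -map_comp /= map_id mem_sort mem_undup. Qed.

Lemma vars_cnorm c j : (j \in vars (cnorm c).1 -> j \in vars c.1) /\
                       (j \in vars (cnorm c).2 -> j \in vars c.2).
Proof.
rewrite cnormE /cnorm_data; cbv zeta; rewrite /= !vars_build /unzip1 -!map_comp /=.
split => /mapP [p Hp ->]; rewrite mem_filter in Hp; case/andP: Hp => _ Hp;
  by apply: vars_nf_s; apply: map_f.
Qed.

Lemma summands_atoms l x : x \in summands l -> {subset atoms x <= atoms l}.
Proof.
elim: l => [i||l _|a IHa b IHb] /=; try by rewrite mem_seq1 => /eqP ->.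
by rewrite mem_cat => /orP [/IHa H|/IHb H] p /H Hp; rewrite mem_cat Hp ?orbT.
Qed.

Lemma eval_split_i l i h :
  (forall n, (Some i, n) \in atoms l -> n = 0) -> (Some i, 0) \in atoms l ->
  eval h l = maxn (h i) (\max_(p <- atoms l | p.1 != Some i) atval h p).
Proof.
move=> H0 Hi; rewrite eval_atoms (bigID (fun p => p.1 == Some i)) /=; congr maxn.
apply/eqP; rewrite eqn_leq; apply/andP; split.
  apply/bigmax_leqP_seq => -[h' n] Hp /eqP /= E; subst h'.
  by rewrite /atval /= (H0 _ Hp) addn0.
by apply: (leq_trans _ (leq_bigmax_seq _ Hi _)); rewrite /atval /= ?addn0 ?eqxx.
Qed.

Lemma max_noti (A : seq (option nat * nat)) i h h' :
  (forall j, j != i -> h j = h' j) ->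
  \max_(p <- A | p.1 != Some i) atval h p = \max_(p <- A | p.1 != Some i) atval h' p.
Proof.
by move=> H; apply: eq_bigr => -[[j|] n] //= Hj; rewrite /atval /= H //.
Qed.

Lemma eval_fix l i h :
  (forall n, (Some i, n) \in atoms l -> n = 0) -> (Some i, 0) \in atoms l ->
  eval (fun j => if j == i then eval h l else h j) l = eval h l.
Proof.
move=> H0 Hi; rewrite !(eval_split_i _ H0 Hi) eqxx.
rewrite (@max_noti _ i _ h); last by move=> j /negPf ->.
by rewrite -maxnA maxnn.
Qed.

Definition msat (s : lsubst) (D : seq constraint) :=
  forall c, c \in D -> sem (subst s c.1) (subst s c.2).
Definition upds (s : lsubst) i L : lsubst := fun j => if j == i then L else s j.

Lemma sem_refl a : sem a a. Proof. by []. Qed.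
Lemma sem_sym a b : sem a b -> sem b a. Proof. by move=> H rho; rewrite H. Qed.
Lemma sem_trans b a c : sem a b -> sem b c -> sem a c.
Proof. by move=> H1 H2 rho; rewrite H1 H2. Qed.

Lemma sem_pt f g x : (forall j, j \in vars x -> sem (f j) (g j)) -> sem (subst f x) (subst g x).
Proof. by move=> H rho; rewrite !eval_subst; apply: eval_ext => j Hj; apply: H. Qed.

Lemma subst1_comp s i L x : subst s (subst1 i L x) = subst (upds s i (subst s L)) x.
Proof. by rewrite /subst1 subst_comp; apply: subst_ext => j; rewrite /upds; case: (j == i). Qed.

Lemma sem_lnorm s x : sem (subst s (lnorm x)) (subst s x).
Proof. by move=> rho; rewrite !eval_subst eval_lnorm. Qed.

Lemma sem_cnorm s c : sem (subst s (cnorm c).1) (subst s (cnorm c).2) <-> sem (subst s c.1) (subst s c.2).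
Proof.
split => H rho; have := cnorm_sem (fun j => eval rho (s j)) c; rewrite -!eval_subst.
  by rewrite H eqxx => /esym /eqP.
by rewrite H eqxx => /eqP.
Qed.

Lemma in_varsC D j : reflect (exists2 c, c \in D & j \in vars c.1 ++ vars c.2) (j \in varsC D).
Proof. exact: flatten_mapP. Qed.

Lemma vars_subst1 i L x j : j \in vars (subst1 i L x) -> (j \in vars x /\ j != i) \/ j \in vars L.
Proof.
move=> /vars_subst [k Hk]; case: (k =P i) => [_|/eqP ne]; first by right.
by rewrite vars_LVar mem_seq1 => /eqP ->; left.
Qed.

Lemma msat_pt f g D : msat f D -> (forall j, sem (f j) (g j)) -> msat g D.
Proof.
move=> H Hp c Hc.
have E1 : sem (subst g c.1) (subst f c.1) by apply: sem_pt => j _; apply: sem_sym.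
have E2 : sem (subst f c.2) (subst g c.2) by apply: sem_pt.
exact: sem_trans (sem_trans (H c Hc) E2).
Qed.

Section Main.
Variable fresh : pred nat.
Variable C0 : seq constraint.
Hypothesis Hnf : forall i, i \in varsC C0 -> ~~ fresh i.

Definition Inv (D : seq constraint) (th : lsubst) :=
  [/\ (forall j, j \in varsC D -> th j = LVar j),
      (forall c, c \in D -> consist c.1 /\ consist c.2),
      (forall s, msat s D -> msat (fun j => subst s (th j)) C0)
    & (forall tau, msat tau C0 -> exists s, msat s D /\
          forall j, j \in varsC C0 -> sem (tau j) (subst s (th j)))].

Lemma Inv_eqi D D2 th : D =i D2 -> Inv D th -> Inv D2 th.
Proof.
move=> E [Ia Ib S M]; split.
- move=> j /in_varsC [c Hc Hj]; apply: Ia; apply/in_varsC; exists c => //; by rewrite E.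
- by move=> c; rewrite -E; apply: Ib.
- by move=> s Hs; apply: S => c Hc; apply: Hs; rewrite -E.
- move=> tau Ht; have [s [Hs Hp]] := M tau Ht; exists s; split => // c Hc.
  by apply: Hs; rewrite E.
Qed.

Lemma i_in_c i l : i \in vars (LMax LZ (LVar i), l).1 ++ vars (LMax LZ (LVar i), l).2.
Proof. by rewrite vars_LMax vars_LZ vars_LVar /= mem_head. Qed.

Lemma sem_c s i l : sem (subst s (LMax LZ (LVar i), l).1) (subst s (LMax LZ (LVar i), l).2) ->
  sem (subst s l) (s i).
Proof. by move=> H rho; rewrite -H /= max0n. Qed.

Lemma elim_gen i l L C th :
  Inv ((LMax LZ (LVar i), l) :: C) th ->
  i \notin vars L ->
  (forall j, j \in vars L -> th j = LVar j) ->
  (forall s, sem (subst (upds s i (subst s L)) (LMax LZ (LVar i))) (subst (upds s i (subst s L)) l)) ->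
  (forall s, msat s ((LMax LZ (LVar i), l) :: C) -> exists s2, [/\ sem (subst s2 L) (s i),
        forall k, k \in varsC C -> k != i -> sem (s2 k) (s k),
        forall j, j \in varsC C0 -> th j = LVar j -> j != i -> sem (s2 j) (s j)
      & forall j, j \in varsC C0 -> th j <> LVar j -> forall k, k \in vars (th j) -> k != i -> sem (s2 k) (s k)]) ->
  Inv (chat (substC i L C)) (upd th i L).
Proof.
set c := (LMax LZ (LVar i), l).
move=> [Ia Ib S M] HiL HthL Hloc Hmgu.
have Hthi : th i = LVar i by apply: Ia; apply/in_varsC; exists c; rewrite ?mem_head ?i_in_c.
have HinD : forall c0, c0 \in C -> cnorm (subst1 i L c0.1, subst1 i L c0.2) \in chat (substC i L C).
  move=> c0 Hc0; apply/mapP; exists (subst1 i L c0.1, subst1 i L c0.2) => //.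
  by apply/mapP; exists c0.
have HD : forall c', c' \in chat (substC i L C) -> exists2 c0, c0 \in C & c' = cnorm (subst1 i L c0.1, subst1 i L c0.2).
  by move=> c' /mapP [x /mapP [c0 Hc0 ->] ->]; exists c0.
split.
- move=> j /in_varsC [c' /HD [c0 Hc0 ->] Hj].
  have : j \in vars (subst1 i L c0.1) ++ vars (subst1 i L c0.2).
    have [V1 V2] := vars_cnorm (subst1 i L c0.1, subst1 i L c0.2) j.
    by move: Hj; rewrite !mem_cat => /orP [/V1 ->|/V2 ->]; rewrite ?orbT.
  rewrite mem_cat => Hj'.
  have [jni thj] : j != i /\ th j = LVar j.
    case/orP: Hj' => /vars_subst1 [[Hj1 Hji]|HjL].
    + by split => //; apply: Ia; apply/in_varsC; exists c0; rewrite ?in_cons ?Hc0 ?orbT // mem_cat Hj1.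
    + by split; [apply: contraNneq HiL => <-|apply: HthL].
    + by split => //; apply: Ia; apply/in_varsC; exists c0; rewrite ?in_cons ?Hc0 ?orbT // mem_cat Hj1 orbT.
    + by split; [apply: contraNneq HiL => <-|apply: HthL].
  by rewrite /upd (negPf jni) thj eqxx.
- by move=> c' /HD [c0 _ ->]; apply: consist_cnorm.
- move=> s Hs.
  pose s' := upds s i (subst s L).
  have Hs' : msat s' (c :: C).
    move=> c1; rewrite in_cons => /orP [/eqP ->|Hc1]; first exact: Hloc.
    by have := Hs _ (HinD _ Hc1); rewrite sem_cnorm /= !subst1_comp.
  apply: msat_pt (S _ Hs') _ => j.
  rewrite /upd; case: (j =P i) => [->|/eqP ne].
    by rewrite Hthi /= /s' /upds eqxx.
  case: (th j =P LVar j) => [->|_].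
    by rewrite /= /s' /upds (negPf ne).
  by apply: sem_sym; apply: (sem_trans (sem_lnorm _ _)); rewrite subst1_comp.
- move=> tau Ht; have [s [Hs Hpt]] := M tau Ht.
  have [s2 [H1 H2 H3 H4]] := Hmgu s Hs.
  pose U := upds s2 i (subst s2 L).
  exists s2; split.
  + move=> c' /HD [c0 Hc0 ->]; rewrite sem_cnorm /= !subst1_comp -/U.
    have HU : forall x, {subset vars x <= varsC C} -> sem (subst U x) (subst s x).
      move=> x Hx; apply: sem_pt => j Hj; rewrite /U /upds.
      case: (j =P i) => [->|/eqP ne]; first exact: H1.
      by apply: H2 => //; apply: Hx.
    have A1 : sem (subst U c0.1) (subst s c0.1).
      by apply: HU => j Hj; apply/in_varsC; exists c0; rewrite // mem_cat Hj.
    have A2 : sem (subst U c0.2) (subst s c0.2).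
      by apply: HU => j Hj; apply/in_varsC; exists c0; rewrite // mem_cat Hj orbT.
    have A3 := Hs c0 ltac:(by rewrite in_cons Hc0 orbT).
    exact: sem_trans A1 (sem_trans A3 (sem_sym A2)).
  + move=> j Hj; apply: (sem_trans (Hpt j Hj)).
    rewrite /upd; case: (j =P i) => [->|/eqP ne].
      by rewrite Hthi /=; apply: sem_sym.
    case: (th j =P LVar j) => [E|NE].
      by rewrite E /=; apply: sem_sym; apply: H3.
    apply: sem_sym; apply: (sem_trans (sem_lnorm _ _)); rewrite subst1_comp -/U.
    apply: sem_pt => k Hk; rewrite /U /upds.
    case: (k =P i) => [->|/eqP nk]; first exact: H1.
    exact: H4 Hk nk.
Qed.

Lemma sem_maxZ x : sem (LMax LZ x) x. Proof. by move=> rho /=; rewrite max0n. Qed.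

Lemma rule_inv c C th D' th' : Inv (c :: C) th -> rule fresh c C th D' th' -> Inv D' th'.
Proof.
move: c C th D' th'; move=> ? ? ? ? ? HI HR; move: HR HI.
case => [l C th|l l' C th _|i l C th HiL|i l i' C th Hfr Hne Hil HiC Hdom Hrng Hsum|s0 C th Hnd Hall]
  [Ia Ib S M].
-
  split.
  + move=> j /in_varsC [c Hc Hj]; apply: Ia; apply/in_varsC; exists c; rewrite ?in_cons ?Hc ?orbT //.
  + by move=> c Hc; apply: Ib; rewrite in_cons Hc orbT.
  + move=> s Hs; apply: S => c; rewrite in_cons => /orP [/eqP -> //|]; exact: Hs.
  + move=> tau Ht; have [s [Hs Hp]] := M tau Ht; exists s; split => // c Hc.
    by apply: Hs; rewrite in_cons Hc orbT.
-
  split.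
  + move=> j /in_varsC [c]; rewrite in_cons => /orP [/eqP ->|Hc] Hj; apply: Ia; apply/in_varsC.
      by exists (l, l'); rewrite ?mem_head // mem_cat orbC -mem_cat.
    by exists c; rewrite ?in_cons ?Hc ?orbT.
  + move=> c; rewrite in_cons => /orP [/eqP ->|Hc].
      by have [? ?] := Ib _ (mem_head _ _).
    by apply: Ib; rewrite in_cons Hc orbT.
  + move=> s Hs; apply: S => c; rewrite in_cons => /orP [/eqP ->|Hc].
      by apply: sem_sym; apply: (Hs (l', l)); rewrite mem_head.
    by apply: Hs; rewrite in_cons Hc orbT.
  + move=> tau Ht; have [s [Hs Hp]] := M tau Ht; exists s; split => // c.
    rewrite in_cons => /orP [/eqP ->|Hc].
      by apply: sem_sym; apply: (Hs (l, l')); rewrite mem_head.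
    by apply: Hs; rewrite in_cons Hc orbT.
-
  apply: (elim_gen (l := l) (L := l)) => //.
  + by move=> j Hj; apply: Ia; apply/in_varsC; exists (LMax LZ (LVar i), l); rewrite ?mem_head // mem_cat Hj orbT.
  + move=> s; rewrite [X in sem _ X](@subst_ext_vars _ s).
      by rewrite /= {1}/upds eqxx; apply: sem_maxZ.
    by move=> j Hj; rewrite /upds; case: (j =P i) => // E; rewrite -E Hj in HiL.
  + move=> s Hs; exists s; split => //.
    by apply: sem_c; apply: Hs; rewrite mem_head.
-
  have Hthi' : th i' = LVar i' by case: (th i' =P LVar i').
  have HinL : forall j, j \in vars (subst1 i (LVar i') l) -> (j \in vars l /\ j != i) \/ j = i'.
    by move=> j /vars_subst1 [H|]; [left|rewrite ?vars_LVar mem_seq1 => /eqP ->; right].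
  have Hcons : consist l by have [_ ?] := Ib _ (mem_head _ _).
  have Hi0 : (Some i, 0) \in atoms l by apply: (summands_atoms Hsum); rewrite mem_head.
  have H0 : forall n, (Some i, n) \in atoms l -> n = 0 by move=> n Hn; apply: Hcons Hn Hi0.
  apply: (elim_gen (l := l) (L := subst1 i (LVar i') l)) => //.
  + apply/negP => /HinL [[_ /eqP //]|E]; by rewrite E eqxx in Hne.
  + move=> j /HinL [[Hj _]|->] //.
    by apply: Ia; apply/in_varsC; exists (LMax LZ (LVar i), l); rewrite ?mem_head // mem_cat Hj orbT.
  + move=> s rho; rewrite /= {1}/upds eqxx max0n subst1_comp !eval_subst.
    set h0 := fun j => eval rho (upds s i (subst s (LVar i')) j).
    rewrite -{1}(eval_fix h0 H0 Hi0); apply: eval_ext => j _.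
    case: (j =P i) => [E|/eqP ne].
      by rewrite E /upds eqxx eval_subst.
    by rewrite /h0 /upds (negPf ne).
  + move=> s Hs; exists (upds s i' (s i)); split.
    * have Hc := sem_c (Hs _ (mem_head _ _)).
      apply: sem_trans Hc; rewrite subst1_comp; apply: sem_pt => j Hj.
      rewrite /upds /= eqxx; case: (j =P i) => [->|_] //.
      by case: (j =P i') => // E; rewrite -E Hj in Hil.
    * move=> k Hk _; rewrite /upds; case: (k =P i') => // E.
      by rewrite -E Hk in HiC.
    * move=> j Hj _ _; rewrite /upds; case: (j =P i') => // E.
      by move: (Hnf Hj); rewrite E Hfr.
    * move=> j Hj Hthj k Hk _; rewrite /upds; case: (k =P i') => // E.
      by case: Hrng; exists j; split => //; rewrite -E.
-
  have Key : forall sg, sem (subst sg LZ) (subst sg (build 0 s0)) <->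
      (forall p, p \in s0 -> sem (subst sg (LMax LZ (LVar p.1))) (subst sg LZ)).
    move=> sg; split.
    + move=> H p Hp rho; have := H rho; rewrite /= eval_subst eval_build max0n => E.
      have := @leq_bigmax_seq _ s0 xpredT (fun p => eval rho (sg p.1) + p.2) p Hp isT.
      rewrite -E /=; lia.
    + move=> H rho; rewrite /= eval_subst eval_build max0n; apply/esym/eqP; rewrite -leqn0.
      apply/bigmax_leqP_seq => p Hp _.
      have := H p Hp rho; rewrite /= max0n => ->.
      by move: (allP Hall p Hp) => /eqP ->.
  have HD : forall c, c \in [seq (LMax LZ (LVar p.1), LZ) | p <- s0] ++ C ->
      (exists2 p, p \in s0 & c = (LMax LZ (LVar p.1), LZ)) \/ c \in C.
    by move=> c; rewrite mem_cat => /orP [/mapP [p Hp ->]|Hc]; [left; exists p|right].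
  split.
  + move=> j /in_varsC [c /HD [[p Hp ->]|Hc] Hj]; apply: Ia; apply/in_varsC.
      exists (LZ, build 0 s0); rewrite ?mem_head //= vars_build.
      move: Hj; rewrite /= ?vars_LMax ?vars_LZ ?vars_LVar mem_seq1 => /eqP ->.
      by apply: map_f.
    by exists c; rewrite ?in_cons ?Hc ?orbT.
  + move=> c /HD [[p Hp ->]|Hc]; last by apply: Ib; rewrite in_cons Hc orbT.
    split => /= a n m; rewrite !inE //.
    by move=> /orP [//|/eqP [_ ->]] /orP [//|/eqP [_ ->]].
  + move=> s Hs; apply: S => c; rewrite in_cons => /orP [/eqP ->|Hc].
      apply/Key => p Hp; apply: (Hs (LMax LZ (LVar p.1), LZ)); rewrite mem_cat; apply/orP; left.
      by apply/mapP; exists p.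
    by apply: Hs; rewrite mem_cat Hc orbT.
  + move=> tau Ht; have [s [Hs Hp]] := M tau Ht; exists s; split => // c /HD [[p Hp' ->]|Hc].
      by apply: (proj1 (Key s) (Hs _ (mem_head _ _))).
    by apply: Hs; rewrite in_cons Hc orbT.
Qed.

End Main.

Lemma steps_inv fresh C0 (Hnf : forall i, i \in varsC C0 -> ~~ fresh i) st st' :
  steps fresh st st' -> Inv C0 st.1 st.2 -> Inv C0 st'.1 st'.2.
Proof.
elim => // st1 st2 st3 [c [C [E HR]]] _ IH HI; apply: IH.
apply: (rule_inv Hnf _ HR); exact: Inv_eqi E HI.
Qed.

Theorem mainTheorem11 (fresh : pred nat)
  (fresh_infinite : forall n, exists m, n <= m /\ fresh m)
  (fresh_strict : exists i, ~~ fresh i)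
  (C : seq constraint) (theta : lsubst) :
  (forall c, c \in C -> constraint_nf c) ->
  (forall i, i \in varsC C -> ~~ fresh i) ->
  steps fresh (C, idsubst) ([::], theta) ->
  models theta C /\
  (forall tau : lsubst, models tau C ->
     exists tau' : lsubst, forall i, i \in varsC C ->
       lequiv (tau i) (subst tau' (theta i))).
Proof.
move=> HC Hnf Hst.
have I0 : Inv C C idsubst.
  split.
  - by [].
  - move=> c Hc; have [k1 [s1 [k2 [s2 [N1 N2 -> _ _]]]]] := HC c Hc.
    case/andP: N1 => U1 _; case/andP: N2 => U2 _.
    by split; apply: consist_build; apply: fn_uniq; [apply: (sorted_uniq ltn_trans ltnn U1)|apply: (sorted_uniq ltn_trans ltnn U2)].
  - by move=> s Hs; apply: msat_pt Hs _ => j; apply: sem_refl.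
  - by move=> tau Ht; exists tau; split => // j _; apply: sem_refl.
have [_ _ S M] := steps_inv Hnf Hst I0.
split.
- move=> c Hc; apply: complete.
  have := S idsubst (fun c H => ltac:(by rewrite in_nil in H)) c Hc.
  have E : forall x, subst (fun j => subst idsubst (theta j)) x = subst theta x.
    by move=> x; apply: subst_ext => j; apply: subst_id.
  by rewrite !E.
- move=> tau Ht.
  have Ht' : msat tau C by move=> c Hc; apply: lequiv_sound; apply: Ht.
  have [s [_ Hp]] := M tau Ht'.
  by exists s => i Hi; apply: complete; apply: Hp.
Qed.
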